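(* Let $n\ge1$, let $y,z\in C(SU(n+1))$ be given by $y(A)=a_{n+1,1}$ and $z(A)=\overline{a_{n+1,n+1}}$, where $a_{ij}$ denotes the $(i,j)$-entry of $A\in SU(n+1)$, and for $\gamma=(\gamma_1,\gamma_2)\in\mathbb{N}^2$ (with $0\in\mathbb{N}$) let $b^{\gamma}=y^{\gamma_1}z^{\gamma_2}$. Let $\epsilon_1=(1,0)$, $\epsilon_2=(0,1)$ and let $\|\cdot\|$ be the supremum norm. Then (1) $\sup_{\{\gamma:\gamma_1=\gamma_2\}}\|b^\gamma\|/\|b^{\gamma+\epsilon_1+\epsilon_2}\|<\infty$; (2) $\sup_{\{\gamma:\gamma_1\ge\gamma_2\}}\|b^\gamma\|/\|b^{\gamma+\epsilon_1}\|<\infty$; (3) $\sup_{\{\gamma:\gamma_1\le\gamma_2\}}\|b^\gamma\|/\|b^{\gamma+\epsilon_2}\|<\infty$. *)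

(* Defs.v *)
From HB Require Import structures.
From mathcomp Require Import all_boot all_order all_algebra.
From mathcomp Require Import complex.
From mathcomp Require Import boolp classical_sets reals.

Set Implicit Arguments. Unset Strict Implicit. Unset Printing Implicit Defensive.
Import Order.TTheory GRing.Theory Num.Theory.
Local Open Scope ring_scope.
Local Open Scope classical_set_scope.

Definition SU (R : realType) (m : nat) : set 'M[R[i]]_m :=
  [set A | A *m (map_mx (@conjc R) A)^T = 1%:M /\ \det A = 1].

Definition supnorm (R : realType) (m : nat) (f : 'M[R[i]]_m -> R[i]) : R :=
  sup [set @Normc.normc R (f A) | A in @SU R m].

Definition yfun (R : realType) (n : nat) (A : 'M[R[i]]_n.+1) : R[i] :=
  A ord_max ord0.
Definition zfun (R : realType) (n : nat) (A : 'M[R[i]]_n.+1) : R[i] :=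
  conjc (A ord_max ord_max).

Definition bgam (R : realType) (n : nat) (g : nat * nat) (A : 'M[R[i]]_n.+1)
  : R[i] := yfun A ^+ g.1 * zfun A ^+ g.2.

(* Main.v *)
Require Import Defs.
From HB Require Import structures.
From mathcomp Require Import all_boot all_order all_algebra.
From mathcomp Require Import complex.
From mathcomp Require Import boolp classical_sets reals.
From mathcomp Require Import ring lra.
Import Order.TTheory GRing.Theory Num.Theory.
Local Open Scope ring_scope.
Import Normc.
Local Open Scope classical_set_scope.
Local Open Scope complex_scope.
Local Open Scope ring_scope.

Section S.
Variable R : realType.

Lemma normc_ge0 (x : R[i]) : 0 <= normc x.
Proof. by case: x => a b /=; rewrite sqrtr_ge0. Qed.

Lemma normc_real (p : R) : 0 <= p -> normc (p%:C) = p.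
Proof. by move=> hp /=; rewrite expr0n /= addr0 sqrtr_sqr ger0_norm. Qed.

Lemma normc_conj (x : R[i]) : normc (x^*)%C = normc x.
Proof. by case: x => a b /=; rewrite sqrrN. Qed.

Lemma normcX (x : R[i]) k : normc (x ^+ k) = normc x ^+ k.
Proof. by elim: k => [|k IH]; rewrite ?expr0 ?normc1 // !exprS normcM IH. Qed.

Lemma normc_sq (x : R[i]) : ((normc x) ^+ 2)%:C = x * x^*%C.
Proof.
case: x => a b /=; rewrite sqr_sqrtr ?addr_ge0 ?sqr_ge0 //.
apply/eqP; rewrite eq_complex /=; apply/andP; split; apply/eqP; ring.
Qed.

Lemma swap_le (a b : nat) (s t : R) : (b <= a)%N -> 0 <= s -> s <= t ->
  s ^+ a * t ^+ b <= t ^+ a * s ^+ b.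
Proof.
move=> hba hs hst; have ht : 0 <= t by apply: le_trans hst.
rewrite -(subnK hba) !exprD -!mulrA [t ^+ b * _]mulrC.
by rewrite ler_wpM2r ?mulr_ge0 ?exprn_ge0 // lerXn2r // nnegrE.
Qed.

Lemma core (a b : nat) (s t : R) : (b <= a)%N -> 0 <= s -> 0 <= t ->
  s ^+ 2 + t ^+ 2 <= 1 -> exists p q : R, [/\ 0 <= p, 0 <= q, p ^+ 2 + q ^+ 2 = 1 &
  s ^+ a * t ^+ b <= 2 * (p ^+ a.+1 * q ^+ b)].
Proof.
move=> hba.
wlog: s t / t <= s.
  move=> H hs ht hst; have [lts|lst] := leP t s; first exact: H.
  have [p [q [hp hq hpq hle]]] := H t s (ltW lst) ht hs (ltac:(by rewrite addrC)).
  exists p, q; split => //; apply: le_trans hle.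
  exact: swap_le hba hs (ltW lst).
move=> hts hs ht hst.
have s1 : s <= 1 by nra.
have [s0|spos] := eqVneq s 0.
  have t0 : t = 0 by apply/eqP; rewrite eq_le ht andbT -s0.
  exists 1, 0; split => //; first by rewrite expr1n expr0n addr0.
  rewrite s0 t0 expr1n mul1r.
  have h1 : (0:R) ^+ a <= 1 by rewrite exprn_ile1.
  have h2 : (0:R) <= 0 ^+ b by rewrite exprn_ge0.
  have := ler_wpM2r h2 h1; rewrite mul1r; lra.
have sp : 0 < s by rewrite lt_def spos hs.
set r := Num.sqrt (s ^+ 2 + t ^+ 2).
have rp : 0 < r by rewrite sqrtr_gt0; nra.
have r1 : r <= 1 by rewrite -sqrtr1 ler_sqrt //; nra.
have r2 : r ^+ 2 = s ^+ 2 + t ^+ 2 by rewrite sqr_sqrtr //; nra.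
have hrd : r != 0 by rewrite gt_eqF.
exists (s / r), (t / r); split.
- by rewrite divr_ge0 // ltW.
- by rewrite divr_ge0 // ltW.
- by rewrite !expr_div_n -mulrDl -r2 divff // expf_neq0.
have ps : s <= s / r by rewrite ler_pdivlMr //; nra.
have qt : t <= t / r by rewrite ler_pdivlMr //; nra.
have p2 : 1 <= 2 * (s / r).
  have e : (s / r) ^+ 2 * r ^+ 2 = s ^+ 2 by rewrite -exprMn divfK.
  have hp0 : 0 <= s / r by rewrite divr_ge0 // ltW.
  have rr : 0 < r ^+ 2 by rewrite exprn_gt0.
  have hp2 : 1 <= 2 * (s / r) ^+ 2.
    rewrite -(ler_pM2r rr) mul1r -mulrA e r2; nra.
  nra.
apply: (@le_trans _ _ ((s / r) ^+ a * (t / r) ^+ b)).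
  by rewrite ler_pM ?exprn_ge0 // lerXn2r // nnegrE ?divr_ge0 // ltW.
have h0 : 0 <= (s / r) ^+ a * (t / r) ^+ b.
  by rewrite mulr_ge0 ?exprn_ge0 ?divr_ge0 // ltW.
rewrite exprS -mulrA mulrA; nra.
Qed.


Lemma core_diag (a : nat) (s t : R) : 0 <= s -> 0 <= t ->
  s ^+ 2 + t ^+ 2 <= 1 -> exists p q : R, [/\ 0 <= p, 0 <= q, p ^+ 2 + q ^+ 2 = 1 &
  s ^+ a * t ^+ a <= 2 * (p ^+ a.+1 * q ^+ a.+1)].
Proof.
move=> hs ht hst; set p := Num.sqrt (2^-1 : R).
have p2 : p ^+ 2 = 2^-1 by rewrite sqr_sqrtr // invr_ge0.
have p0 : 0 <= p by rewrite sqrtr_ge0.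
exists p, p; split => //; first by rewrite p2; field.
have pp : p * p = 2^-1 by rewrite -expr2.
rewrite -[p ^+ a.+1 * _]exprMn pp -exprMn.
rewrite exprS mulrA mulfV ?pnatr_eq0 // mul1r.
rewrite lerXn2r // ?nnegrE ?mulr_ge0 ?invr_ge0 //.
have h : s * t * 2 <= 1 by have := sqr_ge0 (s - t); rewrite sqrrB; lra.
by rewrite -[2^-1 : R]mul1r ler_pdivlMr.
Qed.

Lemma ratio_le (S T : set R) : S !=set0 -> (forall x, S x -> 0 <= x) ->
  (forall y, T y -> 0 <= y) -> (forall y, T y -> y <= 1) ->
  (forall x, S x -> exists2 y, T y & x <= 2 * y) -> sup S / sup T <= 2.
Proof.
move=> [x0 Sx0] S0 T0 T1 ST.
have [y0 Ty0 _] := ST x0 Sx0.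
have hT : has_sup T by split; [exists y0 | exists 1 => y /T1].
have supT0 : 0 <= sup T.
  by apply: (le_trans (T0 _ Ty0)); apply: sup_upper_bound.
have hS : sup S <= 2 * sup T.
  apply: ge_sup; first by exists x0.
  move=> x Sx; have [y Ty xy] := ST x Sx; apply: le_trans xy _.
  by rewrite ler_wpM2l // sup_upper_bound.
have [->|nz] := eqVneq (sup T) 0; first by rewrite invr0 mulr0.
have pT : 0 < sup T by rewrite lt_def nz supT0.
by rewrite ler_pdivrMr.
Qed.

End S.
Section M.
Variable R : realType.
Variable n : nat.
Hypothesis hn : (1 <= n)%N.

Local Notation m := (@ord_max n).
Local Notation o := (@ord0 n).

Lemma hm0 : m != o.
Proof. by rewrite -val_eqE /= -lt0n. Qed.

Definition f (p q : R) (i j : 'I_n.+1) : R :=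
  if i == o then (if j == o then q else if j == m then - p else 0)
  else if i == m then (if j == o then p else if j == m then q else 0)
  else (i == j)%:R.

Lemma f_rest p q i k : k != o -> k != m -> f p q i k = (i == k)%:R.
Proof.
rewrite /f => k0 km; rewrite (negbTE k0) (negbTE km).
case: eqP => [->|_]; first by rewrite eq_sym (negbTE k0).
by case: eqP => [->|_] //; rewrite eq_sym (negbTE km).
Qed.

Lemma sum_rest p q i j :
  \sum_(k | (k != o) && (k != m)) f p q i k * f p q j k =
  ((i == j) && (i != o) && (i != m))%:R.
Proof.
under eq_bigr => k /andP[k0 km] do rewrite !f_rest //.
have [io|io] := boolP ((i != o) && (i != m)).
  rewrite (bigD1 i) //= eqxx mul1r big1 ?addr0.
    by rewrite -andbA io andbT eq_sym.
  by move=> k /andP[_ ki]; rewrite eq_sym (negbTE ki) mul0r.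
rewrite big1 ?andbA; last first.
  move=> k /andP[k0 km]; case: eqP => [ik|]; last by rewrite mul0r.
  by move: io; rewrite ik k0 km.
by move: io; rewrite -andbA => /negbTE ->; rewrite andbF.
Qed.

Definition Mr (p q : R) : 'M[R]_n.+1 := \matrix_(i, j) f p q i j.

Lemma Mr_orth p q : p ^+ 2 + q ^+ 2 = 1 -> Mr p q *m (Mr p q)^T = 1%:M.
Proof.
move=> hpq; apply/matrixP => i j; rewrite !mxE.
have -> : \sum_k Mr p q i k * (Mr p q)^T k j = \sum_k f p q i k * f p q j k.
  by apply: eq_bigr => k _; rewrite !mxE.
rewrite (bigD1 o) //= (bigD1 m) /= ?hm0 // sum_rest.
have hm0' := hm0.
have [->|i0] := eqVneq i o; [|have [->|im] := eqVneq i m];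
(have [->|j0] := eqVneq j o; [|have [->|jm] := eqVneq j m]);
rewrite /f ?eqxx ?(negbTE hm0) ?(negbTE i0) ?(negbTE j0) ?(negbTE im) ?(negbTE jm) /=;
rewrite ?(eq_sym m o) ?(negbTE hm0) /=; try lra.
by rewrite !andbT !mul0r !add0r.
Qed.


Definition dv (p q : R) : 'rV[R]_n.+1 := \row_i (if i == o then \det (Mr p q) else 1).
Definition Mf (p q : R) : 'M[R]_n.+1 := diag_mx (dv p q) *m Mr p q.

Lemma detMr2 p q : p ^+ 2 + q ^+ 2 = 1 -> \det (Mr p q) * \det (Mr p q) = 1.
Proof.
move=> h; have := congr1 determinant (Mr_orth p q h).
by rewrite det_mulmx det_tr det1.
Qed.

Lemma Mf_orth p q : p ^+ 2 + q ^+ 2 = 1 -> Mf p q *m (Mf p q)^T = 1%:M.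
Proof.
move=> h; rewrite /Mf trmx_mul tr_diag_mx mulmxA -(mulmxA _ (Mr p q)) (Mr_orth p q h) //.
rewrite mulmx1; apply/matrixP => i j; rewrite mul_diag_mx !mxE.
have [->|ij] := eqVneq i j; last by rewrite mulr0n mulr0.
rewrite !mulr1n; case: eqP => _ //; first exact: (detMr2 p q h).
by rewrite mulr1.
Qed.

Lemma Mf_det p q : p ^+ 2 + q ^+ 2 = 1 -> \det (Mf p q) = 1.
Proof.
move=> h; rewrite det_mulmx det_diag (bigD1 o) //= big1 ?mulr1.
  by rewrite !mxE eqxx (detMr2 p q h).
by move=> k k0; rewrite !mxE (negbTE k0).
Qed.

Lemma Mf_m0 p q : Mf p q m o = p.
Proof.
rewrite /Mf mul_diag_mx !mxE (negbTE hm0) mul1r /f (negbTE hm0) eqxx //.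
Qed.

Lemma Mf_mm p q : Mf p q m m = q.
Proof.
rewrite /Mf mul_diag_mx !mxE (negbTE hm0) mul1r /f (negbTE hm0) eqxx.
by [].
Qed.

Definition Ac (p q : R) : 'M[R[i]]_n.+1 := map_mx (real_complex R) (Mf p q).

Lemma Ac_SU p q : p ^+ 2 + q ^+ 2 = 1 -> SU (Ac p q).
Proof.
move=> h; split.
  have -> : map_mx (@conjc R) (Ac p q) = Ac p q.
    by apply/matrixP => i j; rewrite !mxE conjc_real.
  by rewrite /Ac map_trmx -map_mxM Mf_orth // map_mx1.
by rewrite /Ac det_map_mx Mf_det // rmorph1.
Qed.


Lemma SU_bound (A : 'M[R[i]]_n.+1) : SU A ->
  normc (A m o) ^+ 2 + normc (A m m) ^+ 2 <= 1.
Proof.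
case=> hA _; have := congr1 (fun M : 'M_n.+1 => M m m) hA.
rewrite !mxE eqxx mulr1n.
under eq_bigr => k _ do rewrite !mxE -normc_sq.
rewrite -rmorph_sum => hsum.
have <- : \sum_(k < n.+1) normc (A m k) ^+ 2 = 1.
  by move/eqP: hsum; rewrite eq_complex /= => /andP[/eqP -> _].
rewrite (bigD1 o) //= (bigD1 m) /= ?hm0 // addrA lerDl.
by apply: sumr_ge0 => k _; rewrite exprn_ge0 ?normc_ge0.
Qed.

Lemma normc_bgam (g : nat * nat) (A : 'M[R[i]]_n.+1) :
  normc (bgam g A) = normc (A m o) ^+ g.1 * normc (A m m) ^+ g.2.
Proof. by rewrite /bgam normcM !normcX /zfun normc_conj. Qed.

Lemma Ac_m0 p q : Ac p q m o = p%:C.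
Proof. by rewrite /Ac mxE Mf_m0. Qed.
Lemma Ac_mm p q : Ac p q m m = q%:C.
Proof. by rewrite /Ac mxE Mf_mm. Qed.

Lemma key (g g' : nat * nat) :
  (forall s t : R, 0 <= s -> 0 <= t -> s ^+ 2 + t ^+ 2 <= 1 ->
    exists p q : R, [/\ 0 <= p, 0 <= q, p ^+ 2 + q ^+ 2 = 1 &
    s ^+ g.1 * t ^+ g.2 <= 2 * (p ^+ g'.1 * q ^+ g'.2)]) ->
  supnorm (@bgam R n g) / supnorm (@bgam R n g') <= 2.
Proof.
move=> H; apply: ratio_le.
- exists (normc (bgam g (Ac 1 0))); exists (Ac 1 0) => //.
  by apply: Ac_SU; rewrite expr1n expr0n addr0.
- by move=> x [A _ <-]; apply: normc_ge0.
- by move=> x [A _ <-]; apply: normc_ge0.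
- move=> x [A hA <-]; rewrite normc_bgam.
  have := SU_bound _ hA; have h1 := normc_ge0 _ (A m o); have h2 := normc_ge0 _ (A m m).
  move=> hb; rewrite mulr_ile1 ?exprn_ge0 ?exprn_ile1 //; nra.
- move=> x [A hA <-]; rewrite normc_bgam.
  have [p [q [hp hq hpq hle]]] := H _ _ (normc_ge0 _ _) (normc_ge0 _ _) (SU_bound _ hA).
  exists (normc (bgam g' (Ac p q))); first by exists (Ac p q) => //; apply: Ac_SU.
  by rewrite normc_bgam Ac_m0 Ac_mm !normc_real.
Qed.

End M.

Theorem lemma3p3 (R : realType) (n : nat) (hn : (1 <= n)%N) :
  (exists M : R, forall g : nat * nat, g.1 = g.2 ->
     supnorm (@bgam R n g) / supnorm (@bgam R n (g.1.+1, g.2.+1)) <= M) /\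
  (exists M : R, forall g : nat * nat, (g.2 <= g.1)%N ->
     supnorm (@bgam R n g) / supnorm (@bgam R n (g.1.+1, g.2)) <= M) /\
  (exists M : R, forall g : nat * nat, (g.1 <= g.2)%N ->
     supnorm (@bgam R n g) / supnorm (@bgam R n (g.1, g.2.+1)) <= M).
Proof.
split; [|split]; exists 2 => g hg; apply: key => // s t hs ht hst.
- rewrite /= -hg; exact: core_diag.
- exact: core.
- have [p [q [hp hq hpq hle]]] := @core R _ _ _ _ hg ht hs (ltac:(by rewrite addrC)).
  exists q, p; split => //; first by rewrite addrC.
  by rewrite mulrC [q ^+ _ * _]mulrC.
Qed.
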